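(* Let $f:\mathbb{R}\to\mathbb{R}$ be twice continuously differentiable, and let $u_L<u_U$ with $f''>0$ on $(u_L,u_U)$ or $f''<0$ on $(u_L,u_U)$. Let $a$ be the nonlinear average defined below. (Merging) Let $x_1<x_2\le x_3<x_4$, let $x_{23}$ satisfy $x_2\le x_{23}\le x_3$, and let $u_1,u_2,u_3,u_4\in[u_L,u_U]$. Then there is at most one $u_{23}\in[u_L,u_U]$ satisfying $$(x_{23}-x_1)\,a(u_1,u_{23})+(x_4-x_{23})\,a(u_{23},u_4)=(x_2-x_1)\,a(u_1,u_2)+(x_3-x_2)\,a(u_2,u_3)+(x_4-x_3)\,a(u_3,u_4).$$ (Insertion) Let $x_2<x_{23}<x_3$ and $u_2,u_3\in[u_L,u_U]$. Then there is at most one $u_{23}\in[u_L,u_U]$ satisfying $$(x_{23}-x_2)\,a(u_2,u_{23})+(x_3-x_{23})\,a(u_{23},u_3)=(x_3-x_2)\,a(u_2,u_3).$$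
   Context: For $g:\mathbb{R}\to\mathbb{R}$ write $[g(u)]_{a}^{b}=g(b)-g(a)$. For $u_1\neq u_2$ the nonlinear average is $a(u_1,u_2)=\frac{[f'(u)u-f(u)]_{u_1}^{u_2}}{[f'(u)]_{u_1}^{u_2}}=\frac{\int_{u_1}^{u_2}f''(u)u\,\mathrm{d}u}{\int_{u_1}^{u_2}f''(u)\,\mathrm{d}u}$, and $a(u,u)=u$. Here $(x_i,u_i)$ are particles (positions and solution values) in a particle method for $u_t+(f(u))_x=0$, and $(x_{23},u_{23})$ is the particle replacing particles 2 and 3 (merging) or inserted between them (insertion). *)

(* Defs.v *)
From Stdlib Require Import Reals Lra.
From Coquelicot Require Import Coquelicot.
Open Scope R_scope.

Definition C2 (f : R -> R) : Prop :=
  forall x : R, ex_derive f x /\ ex_derive (Derive f) x /\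
                continuous (Derive (Derive f)) x.

Definition nl_avg (f : R -> R) (u1 u2 : R) : R :=
  if Req_EM_T u1 u2 then u1
  else ((Derive f u2 * u2 - f u2) - (Derive f u1 * u1 - f u1))
       / (Derive f u2 - Derive f u1).

(* Main.v *)
From Stdlib Require Import Reals Lra.
From Coquelicot Require Import Coquelicot.
Open Scope R_scope.
Require Import Defs.
Lemma strict_incr (F dF : R -> R) a b :
  (forall t, is_derive F t (dF t)) -> (forall t, a < t < b -> dF t > 0) ->
  forall x y, a <= x -> x < y -> y <= b -> F x < F y.
Proof.
  intros HF Hp x y Hx Hxy Hy.
  destruct (MVT_cor2 F dF x y Hxy) as [c [Hc1 Hc2]].
  { intros c _; apply is_derive_Reals; apply HF. }
  assert (dF c > 0) by (apply Hp; lra).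
  assert (0 < dF c * (y - x)) by (apply Rmult_lt_0_compat; lra). lra.
Qed.
Lemma phi_der (f D1 D2 : R -> R) s x t :
  is_derive f t (D1 t) -> is_derive D1 t (D2 t) ->
  is_derive (fun u => s*(D1 u * u - f u - x * D1 u)) t (s*(D2 t * t + D1 t * 1 - D1 t - x*D2 t)).
Proof.
  intros H1 H2. apply is_derive_scal.
  apply (is_derive_minus (fun u => D1 u * u - f u) (fun u => x * D1 u)).
  2: apply is_derive_scal; auto.
  apply (is_derive_minus (fun u => D1 u * u) f). 2: auto.
  apply (is_derive_mult D1 (fun u => u)); auto. exact (@is_derive_id R_AbsRing t). intros; apply Rmult_comm.
Qed.

Lemma C2_d1 f : C2 f -> forall t, is_derive f t (Derive f t).
Proof. intros H t. apply Derive_correct. apply H. Qed.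
Lemma C2_d2 f : C2 f -> forall t, is_derive (Derive f) t (Derive (Derive f) t).
Proof. intros H t. apply Derive_correct. apply H. Qed.

Lemma nl_eq f x : nl_avg f x x = x.
Proof. unfold nl_avg. destruct (Req_EM_T x x); congruence. Qed.
Lemma nl_neq f x y : x <> y -> nl_avg f x y =
  ((Derive f y * y - f y) - (Derive f x * x - f x)) / (Derive f y - Derive f x).
Proof. intros H. unfold nl_avg. destruct (Req_EM_T x y); [contradiction|reflexivity]. Qed.

Lemma s_nz f s uL uU : uL < uU -> (forall u, uL < u < uU -> s * Derive (Derive f) u > 0) -> s <> 0.
Proof. intros H Hs E. assert (K := Hs ((uL+uU)/2) ltac:(lra)). subst s. lra. Qed.

Lemma L_g f s uL uU : C2 f -> (forall u, uL < u < uU -> s * Derive (Derive f) u > 0) ->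
  forall x y, uL <= x -> x < y -> y <= uU -> s * Derive f x < s * Derive f y.
Proof.
  intros Hc Hs. apply (strict_incr (fun u => s * Derive f u) (fun u => s * Derive (Derive f) u)).
  - intros t. apply is_derive_scal. apply C2_d2; auto.
  - auto.
Qed.

Lemma L_lo f s uL uU : C2 f -> uL < uU -> (forall u, uL < u < uU -> s * Derive (Derive f) u > 0) ->
  forall x y, uL <= x -> x < y -> y <= uU -> x < nl_avg f x y.
Proof.
  intros Hc HLU Hs x y Hx Hxy Hy.
  assert (sn := s_nz f s uL uU HLU Hs).
  assert (G := L_g f s uL uU Hc Hs x y Hx Hxy Hy).
  assert (P := strict_incr (fun u => s*(Derive f u * u - f u - x * Derive f u))
     (fun t => s*(Derive (Derive f) t * t + Derive f t * 1 - Derive f t - x*Derive (Derive f) t)) x y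
     (fun t => phi_der f (Derive f) (Derive (Derive f)) s x t (C2_d1 f Hc t) (C2_d2 f Hc t))).
  simpl in P.
  assert (P2 : s * (Derive f x * x - f x - x * Derive f x) < s * (Derive f y * y - f y - x * Derive f y)).
  { apply P; try lra. intros t Ht.
    replace (s * (Derive (Derive f) t * t + Derive f t * 1 - Derive f t - x * Derive (Derive f) t))
      with ((s * Derive (Derive f) t) * (t - x)) by ring.
    apply Rmult_lt_0_compat; [apply Hs; lra | lra]. }
  rewrite nl_neq by lra.
  set (H := (Derive f y * y - f y) - (Derive f x * x - f x)) in *.
  set (D := Derive f y - Derive f x) in *.
  assert (Dn : D <> 0) by (intro E; unfold D in E; nra).
  replace (H / D) with (x + (s*(H - x*D)) / (s*D)) by (field; auto).
  assert (0 < (s*(H - x*D)) / (s*D)).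
  { apply Rdiv_lt_0_compat; unfold H, D; nra. }
  lra.
Qed.

Lemma L_hi f s uL uU : C2 f -> uL < uU -> (forall u, uL < u < uU -> s * Derive (Derive f) u > 0) ->
  forall x y, uL <= x -> x < y -> y <= uU -> nl_avg f x y < y.
Proof.
  intros Hc HLU Hs x y Hx Hxy Hy.
  assert (sn := s_nz f s uL uU HLU Hs).
  assert (G := L_g f s uL uU Hc Hs x y Hx Hxy Hy).
  assert (P := strict_incr (fun u => (-s)*(Derive f u * u - f u - y * Derive f u))
     (fun t => (-s)*(Derive (Derive f) t * t + Derive f t * 1 - Derive f t - y*Derive (Derive f) t)) x y
     (fun t => phi_der f (Derive f) (Derive (Derive f)) (-s) y t (C2_d1 f Hc t) (C2_d2 f Hc t))).
  simpl in P.
  assert (P2 : (-s) * (Derive f x * x - f x - y * Derive f x) < (-s) * (Derive f y * y - f y - y * Derive f y)).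
  { apply P; try lra. intros t Ht.
    replace ((-s) * (Derive (Derive f) t * t + Derive f t * 1 - Derive f t - y * Derive (Derive f) t))
      with ((s * Derive (Derive f) t) * (y - t)) by ring.
    apply Rmult_lt_0_compat; [apply Hs; lra | lra]. }
  rewrite nl_neq by lra.
  set (H := (Derive f y * y - f y) - (Derive f x * x - f x)) in *.
  set (D := Derive f y - Derive f x) in *.
  assert (Dn : D <> 0) by (intro E; unfold D in E; nra).
  replace (H / D) with (y - (s*(y*D - H)) / (s*D)) by (field; auto).
  assert (0 < (s*(y*D - H)) / (s*D)).
  { apply Rdiv_lt_0_compat; unfold H, D; nra. }
  lra.
Qed.

Lemma nl_sym f x y : nl_avg f x y = nl_avg f y x.
Proof.
  destruct (Req_dec x y) as [E|E]. { subst; reflexivity. }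
  rewrite !nl_neq by auto.
  set (A := (Derive f y * y - f y) - (Derive f x * x - f x)).
  set (D := Derive f y - Derive f x).
  replace ((Derive f x * x - f x) - (Derive f y * y - f y)) with (- A) by (unfold A; ring).
  replace (Derive f x - Derive f y) with (- D) by (unfold D; ring).
  destruct (Req_dec D 0) as [Z|Z].
  - rewrite Z, Ropp_0. unfold Rdiv. rewrite Rinv_0. ring.
  - field. auto.
Qed.

Lemma mix_alg A B p q : p > 0 -> q > 0 -> A/p < B/q -> A/p < (A+B)/(p+q) /\ (A+B)/(p+q) < B/q.
Proof.
  intros Hp Hq H.
  set (a := A/p) in *. set (b := B/q) in *.
  assert (EA : A = a*p) by (unfold a; field; lra).
  assert (EB : B = b*q) by (unfold b; field; lra).
  rewrite EA, EB.
  assert (E1 : (a*p + b*q)/(p+q) = a + q*(b-a)/(p+q)) by (field; lra).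
  assert (E2 : (a*p + b*q)/(p+q) = b - p*(b-a)/(p+q)) by (field; lra).
  assert (0 < q*(b-a)/(p+q)) by (apply Rdiv_lt_0_compat; nra).
  assert (0 < p*(b-a)/(p+q)) by (apply Rdiv_lt_0_compat; nra).
  split; lra.
Qed.

Lemma mix3 f s uL uU : C2 f -> uL < uU -> (forall u, uL < u < uU -> s * Derive (Derive f) u > 0) ->
  forall x y z, uL <= x -> x < y -> y < z -> z <= uU ->
  nl_avg f x y < nl_avg f x z /\ nl_avg f x z < nl_avg f y z.
Proof.
  intros Hc HLU Hs x y z Hx Hxy Hyz Hz.
  assert (sn := s_nz f s uL uU HLU Hs).
  assert (a1 := L_hi f s uL uU Hc HLU Hs x y ltac:(lra) ltac:(lra) ltac:(lra)).
  assert (a2 := L_lo f s uL uU Hc HLU Hs y z ltac:(lra) ltac:(lra) ltac:(lra)).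
  assert (g1 := L_g f s uL uU Hc Hs x y ltac:(lra) ltac:(lra) ltac:(lra)).
  assert (g2 := L_g f s uL uU Hc Hs y z ltac:(lra) ltac:(lra) ltac:(lra)).
  rewrite !nl_neq in * by lra.
  set (hx := Derive f x * x - f x) in *.
  set (hy := Derive f y * y - f y) in *.
  set (hz := Derive f z * z - f z) in *.
  set (gx := Derive f x) in *. set (gy := Derive f y) in *. set (gz := Derive f z) in *.
  assert (E : forall H G, G <> 0 -> H / G = (s*H)/(s*G)) by (intros; field; auto).
  assert (N1 : gy - gx <> 0) by nra.
  assert (N2 : gz - gy <> 0) by nra.
  assert (N3 : gz - gx <> 0) by nra.
  rewrite (E _ _ N1), (E _ _ N2), (E _ _ N3) in *.
  replace (s*(hz-hx)) with (s*(hy-hx) + s*(hz-hy)) by ring.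
  replace (s*(gz-gx)) with (s*(gy-gx) + s*(gz-gy)) by ring.
  apply mix_alg; try lra.
Qed.

Lemma mono f s uL uU : C2 f -> uL < uU -> (forall u, uL < u < uU -> s * Derive (Derive f) u > 0) ->
  forall u v w, uL <= u <= uU -> uL <= v -> v < w -> w <= uU -> nl_avg f u v < nl_avg f u w.
Proof.
  intros Hc HLU Hs u v w Hu Hv Hvw Hw.
  destruct (Rtotal_order u v) as [H1|[H1|H1]].
  - apply (mix3 f s uL uU Hc HLU Hs u v w); lra.
  - subst v. rewrite nl_eq. apply (L_lo f s uL uU Hc HLU Hs); lra.
  - rewrite (nl_sym f u v).
    destruct (Rtotal_order u w) as [H2|[H2|H2]].
    + assert (K1 := L_hi f s uL uU Hc HLU Hs v u ltac:(lra) ltac:(lra) ltac:(lra)).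
      assert (K2 := L_lo f s uL uU Hc HLU Hs u w ltac:(lra) ltac:(lra) ltac:(lra)). lra.
    + subst w. rewrite nl_eq. apply (L_hi f s uL uU Hc HLU Hs); lra.
    + rewrite (nl_sym f u w). apply (mix3 f s uL uU Hc HLU Hs v w u); lra.
Qed.

Lemma inj f s uL uU : C2 f -> uL < uU -> (forall u, uL < u < uU -> s * Derive (Derive f) u > 0) ->
  forall al be u1 u4 v w, al > 0 -> be > 0 -> uL <= u1 <= uU -> uL <= u4 <= uU ->
  uL <= v <= uU -> uL <= w <= uU ->
  al * nl_avg f u1 v + be * nl_avg f v u4 = al * nl_avg f u1 w + be * nl_avg f w u4 -> v = w.
Proof.
  intros Hc HLU Hs al be u1 u4 v w Ha Hb H1 H4 Hv Hw E.
  assert (K : forall v w, uL <= v -> v < w -> w <= uU ->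
    al * nl_avg f u1 v + be * nl_avg f v u4 < al * nl_avg f u1 w + be * nl_avg f w u4).
  { intros v' w' ? ? ?.
    assert (M1 := mono f s uL uU Hc HLU Hs u1 v' w' H1 ltac:(lra) ltac:(lra) ltac:(lra)).
    assert (M2 := mono f s uL uU Hc HLU Hs u4 v' w' H4 ltac:(lra) ltac:(lra) ltac:(lra)).
    rewrite (nl_sym f u4 v'), (nl_sym f u4 w') in M2. nra. }
  destruct (Rtotal_order v w) as [L|[L|L]]; auto.
  - specialize (K v w ltac:(lra) L ltac:(lra)). lra.
  - specialize (K w v ltac:(lra) L ltac:(lra)). lra.
Qed.

Theorem lemma2 (f : R -> R) (uL uU : R) :
  C2 f -> uL < uU ->
  ((forall u, uL < u < uU -> Derive (Derive f) u > 0) \/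
   (forall u, uL < u < uU -> Derive (Derive f) u < 0)) ->
  (* merging *)
  (forall x1 x2 x3 x4 x23 u1 u2 u3 u4 : R,
     x1 < x2 -> x2 <= x3 -> x3 < x4 -> x2 <= x23 <= x3 ->
     uL <= u1 <= uU -> uL <= u2 <= uU -> uL <= u3 <= uU -> uL <= u4 <= uU ->
     forall v w : R, uL <= v <= uU -> uL <= w <= uU ->
     (x23 - x1) * nl_avg f u1 v + (x4 - x23) * nl_avg f v u4 =
       (x2 - x1) * nl_avg f u1 u2 + (x3 - x2) * nl_avg f u2 u3
       + (x4 - x3) * nl_avg f u3 u4 ->
     (x23 - x1) * nl_avg f u1 w + (x4 - x23) * nl_avg f w u4 =
       (x2 - x1) * nl_avg f u1 u2 + (x3 - x2) * nl_avg f u2 u3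
       + (x4 - x3) * nl_avg f u3 u4 ->
     v = w) /\
  (* insertion *)
  (forall x2 x23 x3 u2 u3 : R,
     x2 < x23 -> x23 < x3 ->
     uL <= u2 <= uU -> uL <= u3 <= uU ->
     forall v w : R, uL <= v <= uU -> uL <= w <= uU ->
     (x23 - x2) * nl_avg f u2 v + (x3 - x23) * nl_avg f v u3 =
       (x3 - x2) * nl_avg f u2 u3 ->
     (x23 - x2) * nl_avg f u2 w + (x3 - x23) * nl_avg f w u3 =
       (x3 - x2) * nl_avg f u2 u3 ->
     v = w).
Proof.
  intros Hc HLU Hd.
  assert (Hs : exists s, forall u, uL < u < uU -> s * Derive (Derive f) u > 0).
  { destruct Hd as [Hd|Hd]; [exists 1 | exists (-1)]; intros u Hu; specialize (Hd u Hu); lra. }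
  destruct Hs as [s Hs]. split.
  - intros x1 x2 x3 x4 x23 u1 u2 u3 u4 ? ? ? ? ? ? ? ? v w Hv Hw E1 E2.
    apply (inj f s uL uU Hc HLU Hs (x23 - x1) (x4 - x23) u1 u4 v w); try lra.
  - intros x2 x23 x3 u2 u3 ? ? ? ? v w Hv Hw E1 E2.
    apply (inj f s uL uU Hc HLU Hs (x23 - x2) (x3 - x23) u2 u3 v w); try lra.
Qed.
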